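(* Let $G$ be a finite group and $p$ a prime. The following are equivalent: (a) $G$ has a power-free decomposition $G=C\uplus B$ in which $C$ is a cyclic $p$-subgroup of $G$; (b) one of the following holds: (1) $p=2$ and $G$ is an elementary abelian $2$-group of order $\geqslant4$; (2) $p=2$ and $G$ is the dihedral group $D_{2^m}$ of order $2^m$ for some integer $m\geqslant3$; (3) $p>2$ and $G$ is the dihedral group $D_{2p^n}$ of order $2p^n$ (for some $n\geqslant1$), i.e. a Frobenius group with cyclic kernel of order $p^n$ and complement of order $2$.
   Context: The power graph $\mathcal{P}(G)$ of a finite group $G$ has vertex set $G$, two distinct elements being adjacent when one is a power of the other. A power-free decomposition of $G$ is a partition $G=C\uplus B$ where $C$ is a cyclic $p$-subgroup of $G$ of maximal order (for some prime $p$) and $B$ is a subset with $|B|>1$ that is an independent set (pairwise nonadjacent vertices) of $\mathcal{P}(G)$. *)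

(* Defs.v *)
From mathcomp Require Import all_boot all_fingroup all_solvable.
Set Implicit Arguments.
Unset Strict Implicit.
Unset Printing Implicit Defensive.
Local Open Scope group_scope.

Definition power_adj (gT : finGroupType) (x y : gT) : Prop :=
  x <> y /\ ((exists k, x = y ^+ k) \/ (exists k, y = x ^+ k)).

Definition power_independent (gT : finGroupType) (B : {set gT}) : Prop :=
  forall x y, x \in B -> y \in B -> ~ power_adj x y.

Definition max_cyclic_psubgroup (gT : finGroupType) (p : nat)
    (G C : {group gT}) : Prop :=
  [/\ C \subset G, cyclic C, p.-group C, C :!=: 1 &
      forall D : {group gT}, D \subset G -> cyclic D -> p.-group D ->
        #|D| <= #|C|].

Definition power_free_decomposition (gT : finGroupType) (p : nat)
    (G C : {group gT}) (B : {set gT}) : Prop :=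
  [/\ max_cyclic_psubgroup p G C, C :|: B = G, [disjoint C & B],
      1 < #|B| & power_independent B].

(* Main.v *)
Require Import Defs.
From mathcomp Require Import all_boot all_fingroup all_solvable.
From mathcomp Require Import zify.
Set Implicit Arguments.
Unset Strict Implicit.
Local Open Scope group_scope.

Section Aux.
Variable gT : finGroupType.
Implicit Types (G C : {group gT}) (B : {set gT}).

Lemma invol_exp (y : gT) k : y * y = 1 -> y ^+ k = if odd k then y else 1.
Proof.
move=> yy; elim: k => [|k IH]; first by rewrite expg0.
rewrite expgS IH /=; case: (odd k) => /=; by [rewrite yy | rewrite mulg1].
Qed.

Lemma indep_invol B : (forall x, x \in B -> x != 1 /\ x * x = 1) ->
  power_independent B.
Proof.
move=> H x y xB yB [neq [[k ek]|[k ek]]].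
- have [y1 yy] := H y yB; have [x1 _] := H x xB.
  move: ek; rewrite invol_exp //; case: (odd k) => ex; first exact: neq ex.
  by move: x1; rewrite ex eqxx.
- have [x1 xx] := H x xB; have [y1 _] := H y yB.
  move: ek; rewrite invol_exp //; case: (odd k) => ex; first exact: neq (esym ex).
  by move: y1; rewrite ex eqxx.
Qed.

Lemma pfd_invol p G C B : power_free_decomposition p G C B ->
  forall g, g \in B -> g != 1 /\ g * g = 1.
Proof.
case=> _ defG dis _ ind g gB.
have gC : g \notin C by rewrite (disjointFl dis gB).
have gG : g \in G by rewrite -defG inE gB orbT.
split; first by apply: contra gC => /eqP ->; rewrite group1.
case: (eqVneq g^-1 g) => [e | ne]; first by rewrite -{1}e mulVg.
have : g^-1 \in C :|: B by rewrite defG groupV.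
rewrite inE => /orP [|vB]; first by rewrite groupV (negbTE gC).
exfalso; apply: (ind _ _ vB gB); split; first by apply/eqP.
by left; exists #[g].-1; rewrite invg_expg.
Qed.

End Aux.
Lemma dihedral_gens (gT : finGroupType) q (G : {group gT}) : 1 < q -> G \isog 'D_(q.*2) ->
  exists x, [/\ #[x] = q, x \in G, #|G| = q.*2 &
     forall g, g \in G -> g \notin <[x]> -> g * g = 1].
Proof.
move=> q_gt1.
case/(isoGrpP _ (Grp_dihedral q_gt1)); rewrite card_dihedral // => oG.
case/existsP=> -[x y] /= /eqP[defG xq y2 xy].
have{} defG: <[x]> * <[y]> = G.
  by rewrite -norm_joinEr // norms_cycle xy groupV cycle_id.
have ltqm : q < q.*2 by rewrite -addnn -{1}(addn0 q) ltn_add2l ltnW.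
have notXy: y \notin <[x]>.
  apply: contraL ltqm => Xy; rewrite -leqNgt -oG -defG mulGSid ?cycle_subG //.
  by rewrite dvdn_leq ?(ltnW q_gt1) // order_dvdn xq.
have oy: #[y] = 2 by apply: nt_prime_order (group1_contra notXy).
have ox: #[x] = q.
  apply: double_inj; rewrite -muln2 -oy -oG -defG TI_cardMg //.
  by rewrite setIC prime_TIg ?cycle_subG // -orderE oy.
exists x; split => //.
  by rewrite -defG; apply/mulsgP; exists x 1; rewrite ?cycle_id ?group1 ?mulg1.
move=> g; rewrite -defG => /mulsgP [a b Xa Yb ->] nX.
move: Yb; rewrite cycle2g // !inE => /orP [/eqP b1|/eqP eb].
  by move: nX; rewrite b1 mulg1 Xa.
case/cycleP: Xa => i ->; rewrite eb.
have e : (x ^+ i) ^ y = (x ^+ i)^-1 by rewrite conjXg xy expgVn.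
have yV : y^-1 = y by apply/eqP; rewrite eq_invg_mul -{2}(expg1 y) -expgS y2.
by rewrite -mulgA (mulgA y) -{1}yV -/(conjg _ _) -mulgA -/(conjg _ _) e mulgV.
Qed.

Lemma pfd_compl (gT : finGroupType) p (G C : {group gT}) :
  max_cyclic_psubgroup p G C -> #|C|.+1 < #|G| ->
  (forall g, g \in G -> g \notin C -> g * g = 1) ->
  power_free_decomposition p G C (G :\: C).
Proof.
move=> mx cG inv; have [sCG _ _ _ _] := mx.
split => //.
- apply/setP => g; rewrite !inE; case gC: (g \in C) => //=.
  by rewrite (subsetP sCG).
- by apply/pred0P => g /=; rewrite !inE; case: (g \in C); rewrite ?andbF.
- by rewrite cardsD (setIidPr sCG) ltn_subRL addn1.
- apply: indep_invol => g; rewrite inE => /andP [nC gG]; split; last exact: inv.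
  by apply: contra nC => /eqP ->; rewrite group1.
Qed.

Lemma dihedral_pfd (gT : finGroupType) p n (G : {group gT}) :
  prime p -> 0 < n -> G \isog 'D_((p ^ n).*2) ->
  exists (C : {group gT}) (B : {set gT}), power_free_decomposition p G C B.
Proof.
move=> pp n0 iso.
have q1 : 1 < p ^ n.
  by rewrite -(exp1n n) ltn_exp2r ?prime_gt1 // -lt0n.
have [x [ox xG oG inv]] := @dihedral_gens _ _ _ q1 iso.
exists <[x]>%G, (G :\: <[x]>); apply: pfd_compl => //.
- split.
  + by rewrite cycle_subG.
  + exact: cycle_cyclic.
  + rewrite /pgroup /= (_ : #|_| = (p ^ n)%N); last exact: ox.
    by rewrite pnatX pnat_id.
  + rewrite /= trivg_card1 (_ : #|_| = (p ^ n)%N); last exact: ox.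
    by move: q1; clear; lia.
  + move=> D sDG /cyclicP [d eD] _; rewrite /= eD.
    rewrite [X in _ <= X](_ : #|_| = (p ^ n)%N); last exact: ox.
    have dG : d \in G by rewrite -cycle_subG -eD.
    case dX: (d \in <[x]>).
      by rewrite -ox; apply: subset_leq_card; rewrite cycle_subG.
    have dd := inv d dG (negbT dX); change (#[d] <= p ^ n)%N.
    have : #[d] %| 2 by rewrite order_dvdn expgS expg1 dd.
    move/dvdn_leq => /(_ isT); move: q1; clear; lia.
- rewrite /= oG (_ : #|_| = (p ^ n)%N); last exact: ox.
  by move: q1; clear; lia.
Qed.

Unset Implicit Arguments.
Set Strict Implicit.

Theorem theorem3p8 (gT : finGroupType) (G : {group gT}) (p : nat) :
  prime p ->
  (exists (C : {group gT}) (B : {set gT}), power_free_decomposition p G C B)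
  <->
  [\/ (p = 2 /\ 2.-abelem G /\ 4 <= #|G|),
      (p = 2 /\ exists m, 3 <= m /\ G \isog 'D_(2 ^ m)) |
      (2 < p /\ exists n, 1 <= n /\ G \isog 'D_(2 * p ^ n))].
Proof.
move=> pp; split.
- case=> C [B pfd].
  have inv := pfd_invol pfd.
  case: (pfd) => [[sCG cycC pC ntC maxC] defG dis B1 ind].
  have memB : forall g, g \in G -> g \notin C -> g \in B.
    by move=> g gG gC; move: gG; rewrite -defG inE (negbTE gC).
  have [c eC] := cyclicP cycC.
  have [_ dvdC [k oC0]] := pgroup_pdiv pC ntC.
  have oC : #|C| = (p ^ k.+1)%N := oC0; clear oC0.
  have [x xB] : exists x, x \in B by apply/card_gt0P; apply: ltnW.
  have xG : x \in G by rewrite -defG inE xB orbT.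
  have xC : x \notin C by rewrite (disjointFl dis xB).
  have [x1 xx] := inv x xB.
  have cardG : #|G| = #|C| + #|B|.
    by rewrite -defG cardsU (disjoint_setI0 dis) cards0 subn0.
  case: (leqP #|C| 2) => hC.
  + have C1 : 1 < #|C| by rewrite ltnNge leq_eqVlt ltnS leqn0 -trivg_card1 (negbTE ntC) cards_eq0 /=; apply/negP => /eqP e; move: (group1 C); rewrite e inE.
    have C2 : #|C| = 2 by apply/eqP; rewrite eqn_leq hC C1.
    have p2 : p = 2.
      have := dvdn_leq (ltnW C1) dvdC; rewrite C2 => pl2.
      have := prime_gt1 pp; move: pl2; clear; lia.
    constructor 1; split => //; split.
    * apply: exponent2_abelem; apply/exponentP => g gG.
      case gC: (g \in C).
        by apply/eqP; rewrite -order_dvdn -C2 order_dvdG.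
      by have [_ gg] := inv g (memB g gG (negbT gC)); rewrite expgS expg1 gg.
    * by rewrite cardG C2; move: B1; clear; lia.
  + have ocC : #|C| = #[c] by rewrite eC.
    have cC : c \in C by rewrite eC cycle_id.
    have c1 : c != 1 by rewrite -order_gt1 -ocC; move: hC; clear; lia.
    have xzB : forall y z, y \in B -> z \in C -> y * z \in B.
      move=> y z yB zC; have yG : y \in G by rewrite -defG inE yB orbT.
      apply: memB; first by rewrite groupM // (subsetP sCG).
      by rewrite groupMr // (disjointFl dis yB).
    have invV : forall y, y \in B -> y^-1 = y.
      by move=> y yB; have [_ yy] := inv y yB; apply/eqP; rewrite eq_invg_mul yy.
    have invc : forall y, y \in B -> c ^ y = c^-1.
      move=> y yB; have [_ yy] := inv y yB.
      have [_ ycyc] := inv _ (xzB y c yB cC).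
      have : (y * c)^-1 = y * c by apply/eqP; rewrite eq_invg_mul ycyc.
      rewrite invMg (invV y yB) => h.
      by rewrite /conjg (invV y yB) mulgA -h -mulgA yy mulg1.
    have BxC : forall y, y \in B -> x * y \in C.
      move=> y yB; apply/negPn/negP => nC.
      have yG : y \in G by rewrite -defG inE yB orbT.
      have xyB := memB _ (groupM xG yG) nC.
      have ecom : c ^ (x * y) = c by rewrite conjgM invc // conjVg invc // invgK.
      have com : commute (x * y) c by rewrite /commute [RHS]conjgC ecom.
      have [_ e1] := inv _ (xzB _ c xyB cC).
      have [_ e2] := inv _ xyB.
      have : (x * y * c) ^+ 2 = 1 by rewrite expgS expg1 e1.
      rewrite expgMn // expgS expg1 e2 mul1g => /eqP.
      rewrite -order_dvdn => /dvdn_leq; move/(_ isT).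
      by rewrite -ocC leqNgt hC.
    have eB : B = x *: C.
      apply/setP => g; rewrite mem_lcoset (invV x xB); apply/idP/idP; first exact: BxC.
      by move=> h; have := xzB x _ xB h; rewrite mulgA xx mul1g.
    have cardG2 : #|G| = (#|C|).*2 by rewrite cardG eB card_lcoset addnn.
    have [y1 yy] := inv _ (xzB x c xB cC).
    have oy : #[x * c] = 2 by apply: nt_prime_order => //; rewrite expgS expg1.
    have ox : #[x] = 2 by apply: nt_prime_order => //; rewrite expgS expg1.
    have neq : x != x * c.
      by apply: contra c1 => /eqP e; rewrite -(mulKg x c) -e mulVg.
    have eG : <<[set x; x * c]>> = G.
      apply/eqP; rewrite eqEsubset; apply/andP; split.
        rewrite gen_subG; apply/subsetP => g; rewrite !inE.
        by case/orP => /eqP ->; rewrite ?groupM // (subsetP sCG).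
      apply/subsetP => g gG.
      have xH : x \in <<[set x; x * c]>> by rewrite mem_gen // set21.
      have yH : x * c \in <<[set x; x * c]>> by rewrite mem_gen // set22.
      have cH : c \in <<[set x; x * c]>>.
        have : x^-1 * (x * c) \in <<[set x; x * c]>> by rewrite groupM ?groupV.
        by rewrite mulKg.
      have CH : C \subset <<[set x; x * c]>> by rewrite eC cycle_subG.
      case gC: (g \in C); first exact: (subsetP CH).
      have := subsetP CH _ (BxC _ (memB g gG (negbT gC))).
      move=> h; have : x^-1 * (x * g) \in <<[set x; x * c]>> by rewrite groupM ?groupV.
      by rewrite mulKg.
    have := involutions_gen_dihedral ox oy neq; rewrite /= eG cardG2 => iso.
    case: (eqVneq p 2) => [p2|p2].
    * constructor 2; split => //.
      case: k oC => [|k] oC; first by move: hC; rewrite oC p2.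
      exists k.+3; split => //.
      by move: iso; rewrite (_ : (#|C|).*2 = 2 ^ k.+3)%N // oC p2 -mul2n -expnS.
    * constructor 3; split.
        by have := prime_gt1 pp; move: p2; clear; move/eqP; lia.
      exists k.+1; split => //.
      by move: iso; rewrite (_ : (#|C|).*2 = 2 * p ^ k.+1)%N // oC mul2n.
- case=> [[p2 [ab G4]] | [p2 [m [m3 iso]]] | [p2 [n [n1 iso]]]].
  + subst p.
    have ntG : G :!=: 1 by apply/negP => /eqP e; move: G4; rewrite e cards1.
    have [x xG x1] := trivgPn _ ntG.
    have ox := abelem_order_p ab xG x1.
    exists <[x]>%G, (G :\: <[x]>); apply: pfd_compl.
    * split.
      -- by rewrite cycle_subG.
      -- exact: cycle_cyclic.
      -- by rewrite /pgroup /= (_ : #|_| = 2); last exact: ox.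
      -- by rewrite /= trivg_card1 (_ : #|_| = 2); last exact: ox.
      -- move=> D sDG /cyclicP [d eD] _; rewrite /= eD.
         have dG : d \in G by rewrite -cycle_subG -eD.
         change (#[d] <= #[x])%N; rewrite ox.
         case: (eqVneq d 1) => [->|d1]; first by rewrite order1.
         by rewrite (abelem_order_p ab dG d1).
    * by change (#[x].+1 < #|G|)%N; rewrite ox.
    * move=> g gG gX.
      have g1 : g != 1 by apply: contra gX => /eqP ->; exact: group1.
      by have := expg_order g; rewrite (abelem_order_p ab gG g1) expgS expg1.
  + subst p; apply: (@dihedral_pfd _ 2 m.-1) => //; first by move: m3; clear; lia.
    by rewrite (_ : (2 ^ m.-1).*2 = 2 ^ m)%N // -mul2n -expnS prednK //; move: m3; clear; lia.
  + apply: (@dihedral_pfd _ p n) => //.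
    by rewrite -mul2n.
Qed.
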